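(* Let $\pi=(d_1,\ldots,d_n)$ be a full sequence with $n$ elements, all of whose elements lie in $\{1,\ldots,d_{\max}\}$ (i.e. $\pi=(d_{\max},\ldots,d_{\max},d_{\max}-1,\ldots,d_{\max}-1,\ldots,1,\ldots,1)$), where $d_{\max}$ is its largest element and $d_{\max}\leq n/2$. Then $\pi$ is graphic.
   Context: All graphs are finite, without loops or multiple edges. A sequence $\pi=(d_1,\ldots,d_n)$ of nonnegative integers is called graphic if there exists a graph with $n$ vertices whose vertex degrees are $d_1,\ldots,d_n$; such a graph is called a realization of $\pi$. A sequence $\pi$ with largest element $d_{\max}$ is called a full sequence if every integer $d$ with $1\leq d\leq d_{\max}$ is an element of $\pi$, and the sum of the elements of $\pi$ is even. *)

(* Defs.v *)
From mathcomp Require Import all_boot.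
Set Implicit Arguments. Unset Strict Implicit. Unset Printing Implicit Defensive.

Definition simple_graph n (e : rel 'I_n) : Prop :=
  irreflexive e /\ symmetric e.

Definition deg n (e : rel 'I_n) (v : 'I_n) : nat := #|[set w | e v w]|.

Definition graphic (d : seq nat) : Prop :=
  exists e : rel 'I_(size d),
    simple_graph e /\ forall v : 'I_(size d), deg e v = nth 0 d v.

Definition dmax (d : seq nat) : nat := \max_(x <- d) x.

Definition full_seq (d : seq nat) : Prop :=
  (forall k, 1 <= k <= dmax d -> k \in d) /\ ~~ odd (sumn d).

(* Main.v *)
Require Import Defs.
From mathcomp Require Import all_boot perm zify.
Set Implicit Arguments. Unset Strict Implicit. Unset Printing Implicit Defensive.

Lemma transport (T : finType) (e : rel T) n (h : T -> 'I_n) d :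
  size d = n -> bijective h -> irreflexive e -> symmetric e ->
  (forall v, #|[set w | e v w]| = nth 0 d (h v)) -> graphic d.
Proof.
move=> Hn [g hK gK] irr sym Hdeg; subst n.
exists (fun i j => e (g i) (g j)); split.
  by split; [move=> i; apply: irr | move=> i j; apply: sym].
move=> v; rewrite /deg.
have -> : [set w | e (g v) (g w)] = h @: [set w | e (g v) w].
  apply/setP => w; rewrite inE; apply/idP/imsetP.
    by move=> H; exists (g w); rewrite ?inE ?gK.
  by case=> u; rewrite inE => Hu ->; rewrite hK.
by rewrite card_imset ?Hdeg ?gK //; apply: (can_inj hK).
Qed.

Lemma graphic_nil : graphic [::].
Proof.
exists (fun _ _ => false); split; first by split.
by case.
Qed.

Lemma graphic_perm d d' : perm_eq d' d -> graphic d -> graphic d'.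
Proof.
move=> Hp [e [[irr sym] Hdeg]].
have /tuple_permP [p Hd'] : perm_eq d' (in_tuple d) := Hp.
have Hs : size d' = size d by rewrite Hd' size_tuple.
apply: (@transport _ e _ (fun v => p^-1 v)%g) => //.
  by exists (fun v => p v); move=> v; rewrite ?permK ?permKV.
move=> v; rewrite -/(deg e _) Hdeg.
have -> : nth 0 d' (p^-1 v)%g = tnth (in_tuple d) (p (p^-1 v)%g).
  by rewrite Hd' -tnth_nth tnth_mktuple.
by rewrite permKV (tnth_nth 0).
Qed.

Lemma card_lt m k : k <= m -> #|[set j : 'I_m | j < k]| = k.
Proof.
move=> Hk.
have -> : [set j : 'I_m | j < k] = widen_ord Hk @: [set: 'I_k].
  apply/setP => j; rewrite inE; apply/idP/imsetP.
    by move=> Hj; exists (Ordinal Hj); rewrite ?inE //; apply: val_inj.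
  by case=> u _ ->; rewrite /= ltn_ord.
by rewrite card_imset ?cardsT ?card_ord //; by move=> x y /(congr1 val) /= /val_inj.
Qed.

Lemma nth_layoff s r i : all (fun x => 0 < x) s ->
  nth 0 (s ++ r) i = (i < size s) + nth 0 (map predn s ++ r) i.
Proof.
move=> Hpos; rewrite !nth_cat size_map.
case: ifP => // Hi; rewrite (nth_map 0) //.
have : 0 < nth 0 s i by apply: (allP Hpos); apply: mem_nth.
by case: (nth 0 s i).
Qed.

Lemma layoff s r : all (fun x => 0 < x) s -> graphic (map predn s ++ r) ->
  graphic (size s :: s ++ r).
Proof.
move=> Hpos [e [[irr sym] Hdeg]].
move: e irr sym Hdeg; set m := size (map predn s ++ r) => e irr sym Hdeg.
pose e' : rel (option 'I_m) := fun a b => match a, b with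
  | Some i, Some j => e i j
  | None, Some j => j < size s
  | Some i, None => i < size s
  | None, None => false end.
pose h := fun o : option 'I_m => if o is Some i then lift ord0 i else (ord0 : 'I_m.+1).
have Hm : m <= m := leqnn m.
apply: (@transport _ e' m.+1 h).
- by rewrite /m /= !size_cat size_map.
- exists (fun j => unlift ord0 j).
    by case=> [i|] /=; [rewrite liftK | rewrite unlift_none].
  by move=> j; case: unliftP => [i ->|->].
- by case=> [i|] //=; apply: irr.
- by case=> [i|] [j|] //=; apply: sym.
- case=> [i|] /=.
  + rewrite add0n nth_layoff // -/(deg e i) -Hdeg.
    have HB : [set w | e' (Some i) w] =
       (if i < size s then None |: [set Some j | j in [set j | e i j]]
        else [set Some j | j in [set j | e i j]]).
      have Sinj : injective (@Some 'I_m) by move=> x y [<-].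
      apply/setP => w; case: w => [j|]; rewrite inE /=.
        by case: ifP => _; rewrite ?inE (mem_imset _ _ Sinj) inE.
      case: ifP => Hi; first by rewrite !inE eqxx.
      by apply/esym/negbTE/imsetP; case.
    rewrite HB /deg; case: ifP => Hi.
      rewrite cardsU1 card_imset; last by move=> x y [<-].
      by have -> : None \notin [set Some j | j in [set j | e i j]]
        by apply/imsetP; case.
    by rewrite card_imset //; move=> x y [<-].
  + have -> : [set w | e' None w] = [set Some j | j in [set j : 'I_m | j < size s]].
      apply/setP => w; rewrite inE; case: w => [j|] /=.
        by rewrite mem_imset ?inE //; move=> x y [<-].
      by apply/esym/imsetP; case.
    rewrite card_imset; last by move=> x y [<-].
    by rewrite card_lt // /m size_cat size_map leq_addr.
Qed.

Lemma sub_exists (s t : seq nat) :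
  (forall x, count_mem x s <= count_mem x t) -> exists r, perm_eq t (s ++ r).
Proof.
elim: s t => [|a s IH] t H; first by exists t; rewrite perm_refl.
have Ha : a \in t by rewrite -has_pred1 has_count; have := H a; rewrite /= eqxx; lia.
have Hp := perm_to_rem Ha.
have [r Hr] : exists r, perm_eq (rem a t) (s ++ r).
  apply: IH => x; have := H x; move/seq.permP: Hp => ->; rewrite /=.
  by rewrite leq_add2l.
by exists r; apply: (perm_trans Hp); rewrite /= perm_cons.
Qed.

Lemma graphic_zeros z e : all (pred1 0) z -> graphic e -> graphic (z ++ e).
Proof.
elim: z => [|a z IH] //= /andP [/eqP -> Hz] He.
by have := @layoff [::] (z ++ e) isT (IH Hz He).
Qed.

Lemma filter_pos l : graphic (filter (fun x => 0 < x) l) -> graphic l.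
Proof.
move=> H.
have Hp : perm_eq l (filter (predC (fun x => 0 < x)) l ++ filter (fun x => 0 < x) l).
  by rewrite perm_sym perm_catC perm_filterC.
apply: (graphic_perm Hp); apply: graphic_zeros => //.
by apply/allP => x; rewrite mem_filter /= -eqn0Ngt => /andP [].
Qed.

Lemma sumn_predn s : all (fun x => 0 < x) s -> sumn (map predn s) + size s = sumn s.
Proof.
elim: s => [|a s IH] //= /andP [Ha Hs].
by rewrite -(IH Hs); case: a Ha => // a _ /=; rewrite addnS addSn !addnA.
Qed.

Lemma sumn_filter_pos l : sumn (filter (fun x => 0 < x) l) = sumn l.
Proof. by elim: l => [|a l IH] //=; case: a => //=; rewrite IH. Qed.

Lemma step d s k : 0 \notin d -> size s = k -> all (fun x => 0 < x) s ->
  (forall x, count_mem x s + (k == x) <= count_mem x d) ->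
  exists e, [/\ graphic e -> graphic d,
    forall x, count_mem x e = if x == 0 then 0
       else count_mem x.+1 s + (count_mem x d - (k == x) - count_mem x s),
    size e + (count_mem 1 s).+1 = size d &
    sumn e + k.*2 = sumn d].
Proof.
move=> H0 Hk Hpos Hc.
have Hkd : k \in d.
  by rewrite -has_pred1 has_count; have := Hc k; rewrite eqxx addn1; apply: leq_trans.
have Hp := perm_to_rem Hkd.
have [r Hr] : exists r, perm_eq (rem k d) (s ++ r).
  apply: sub_exists => x; have := Hc x; move/seq.permP: Hp => -> /=.
  lia.
have Hd : perm_eq d (k :: s ++ r) by apply: (perm_trans Hp); rewrite perm_cons.
have Hcnt : forall x, count_mem x d = (k == x) + count_mem x s + count_mem x r.
  by move=> x; move/seq.permP: Hd => -> /=; rewrite count_cat addnA.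
have Hmap : forall x, count_mem x (map predn s) = count_mem x.+1 s.
  move=> x; rewrite count_map; apply: eq_in_count => y Hy /=.
  by have := allP Hpos y Hy; case: y {Hy}.
have Hr0 : count_mem 0 r = 0.
  have := Hcnt 0; move: H0; rewrite -has_pred1 has_count -eqn0Ngt => /eqP ->.
  move=> E; lia.
exists (filter (fun x => 0 < x) (map predn s ++ r)); split.
- move=> He; apply: (graphic_perm Hd); rewrite -Hk.
  by apply: layoff => //; apply: filter_pos.
- move=> x; rewrite count_filter; case: eqP => [->|/eqP Hx].
    by apply/eqP; rewrite -leqn0 leqNgt -has_count; apply/hasP => [[y _ /= /andP [/eqP ->]]].
  have -> : count (predI (pred1 x) (fun x => 0 < x)) (map predn s ++ r) =
            count_mem x (map predn s ++ r).
    by apply: eq_count => y /=; case: eqP => // ->; rewrite lt0n Hx.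
  rewrite count_cat Hmap Hcnt; lia.
- rewrite size_filter.
  have := count_predC (fun x => 0 < x) (map predn s ++ r).
  have -> : count (predC (fun x => 0 < x)) (map predn s ++ r) = count_mem 0 (map predn s ++ r).
    by apply: eq_count => y /=; rewrite -eqn0Ngt.
  rewrite !count_cat Hmap Hr0 (perm_size Hd) /= !size_cat size_map; lia.
- rewrite sumn_filter_pos (perm_sumn Hd) /= !sumn_cat -(sumn_predn Hpos) Hk; lia.
Qed.

Lemma sum_eq_count (a : nat) (u : seq nat) : \sum_(x <- u) (a == x) = count_mem a u.
Proof. by elim: u => [|y u IH]; rewrite ?big_nil ?big_cons //= IH eq_sym. Qed.

Lemma sum_count (u d : seq nat) : uniq u -> {subset d <= u} ->
  \sum_(x <- u) count_mem x d = size d.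
Proof.
move=> Hu; elim: d => [|a d IH] Hs /=; first by rewrite big1.
rewrite big_split /= sum_eq_count IH; last by move=> x Hx; apply: Hs; rewrite inE Hx orbT.
by rewrite count_uniq_mem // Hs // mem_head.
Qed.

Lemma memcE (x : nat) (s : seq nat) : (x \in s) = (0 < count_mem x s).
Proof. by rewrite -has_pred1 has_count. Qed.

Lemma cnt_A x j D : j <= D ->
  count_mem x (nseq j D ++ iota j (D - j)) = (D == x) * j + (j <= x < D).
Proof.
move=> H; rewrite count_cat count_nseq count_uniq_mem ?iota_uniq // mem_iota.
by rewrite subnKC.
Qed.

Lemma cnt_E x x0 D : 0 < D ->
  count_mem x (iota 1 D.-1 ++ [:: x0]) = (0 < x < D) + (x0 == x).
Proof.
move=> H; rewrite count_cat count_uniq_mem ?iota_uniq // mem_iota /= addn0.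
by rewrite add1n prednK.
Qed.

Lemma iota_last D : 0 < D -> iota 1 D = iota 1 D.-1 ++ [:: D].
Proof. by case: D => // D _; rewrite -(addn1 D) iotaD addn1 /= add1n. Qed.

Lemma leq_sum_seq (r : seq nat) (F1 F2 : nat -> nat) :
  (forall i, i \in r -> F1 i <= F2 i) -> \sum_(i <- r) F1 i <= \sum_(i <- r) F2 i.
Proof.
elim: r => [|a r IH] H; rewrite ?big_nil ?big_cons //.
apply: leq_add; first by apply: H; rewrite mem_head.
by apply: IH => i Hi; apply: H; rewrite inE Hi orbT.
Qed.
Definition cnt (s : seq nat) (x : nat) := count_mem x s.

Lemma memc (x : nat) (s : seq nat) : (x \in s) = (0 < cnt s x).
Proof. exact: memcE. Qed.

Lemma cnt_nseq n a x : cnt (nseq n a) x = (a == x) * n.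
Proof. by rewrite /cnt count_nseq. Qed.

Lemma cntA x j D : j <= D ->
  cnt (nseq j D ++ iota j (D - j)) x = (D == x) * j + (j <= x < D).
Proof. exact: cnt_A. Qed.

Lemma cntE x x0 D : 0 < D ->
  cnt (iota 1 D.-1 ++ [:: x0]) x = (0 < x < D) + (x0 == x).
Proof. exact: cnt_E. Qed.

Lemma main n : forall (d : seq nat) (D : nat), size d <= n ->
  (forall x, x \in d -> 0 < x <= D) ->
  (forall x, 0 < x <= D -> x \in d) ->
  ~~ odd (sumn d) -> D.*2 <= (size d).+1 -> graphic d.
Proof.
elim: n => [|n IH] d D Hn Hin Hfull Hodd Hsz.
  by case: d Hn {Hin Hfull Hodd Hsz} => // _; apply: graphic_nil.
have H0 : 0 \notin d by apply/negP => /Hin.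
have Hc1 : forall x, 0 < x <= D -> 0 < cnt d x.
  by move=> x Hx; have := Hfull x Hx; rewrite memc.
have Hc0 : forall x, D < x -> cnt d x = 0.
  move=> x Hx; apply/eqP; rewrite -leqn0 leqNgt -memc; apply/negP => /Hin; lia.
have Hcz : cnt d 0 = 0.
  by apply/eqP; rewrite -leqn0 leqNgt -memc.
have concl : forall s k D', size s = k -> all (fun x => 0 < x) s ->
    (forall x, cnt s x + (k == x) <= cnt d x) ->
    (forall x, D' < x -> cnt s x.+1 + (cnt d x - (k == x) - cnt s x) = 0) ->
    (forall x, 0 < x <= D' -> 0 < cnt s x.+1 + (cnt d x - (k == x) - cnt s x)) ->
    D'.*2 <= size d - cnt s 1 -> graphic d.
  move=> s k D' Hk Hpos Hs Ha Hb Hsz'.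
  have [e [He Hce0 Hse Hsume]] := step H0 Hk Hpos Hs.
  have Hce : forall x, cnt e x = if x == 0 then 0 else cnt s x.+1 + (cnt d x - (k == x) - cnt s x) := Hce0.
  have Hse' : size e + (cnt s 1).+1 = size d := Hse.
  apply: He; apply: (IH e D').
  - by rewrite -ltnS; apply: leq_trans Hn; rewrite -Hse' addnS ltnS leq_addr.
  - move=> x; rewrite memc Hce; case: eqP => // /eqP Hx0 Hx.
    rewrite lt0n Hx0 /=; case: (leqP x D') => // /Ha; lia.
  - move=> x Hx; rewrite memc Hce; case: eqP => [Hx0|_]; first lia.
    exact: Hb.
  - by move: Hodd; rewrite -Hsume oddD odd_double addbF.
  - by move: Hsz'; rewrite -Hse' addnS -addSn addnK.
case: (posnP D) => [HD0|HD].
  by case: d Hn Hin {Hfull Hodd Hsz H0 Hc1 Hc0 Hcz concl} => [_ _|a d _ /(_ a (mem_head _ _))];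
    [apply: graphic_nil | rewrite HD0; lia].
have HcD : 0 < cnt d D by apply: Hc1; lia.
have Hc11 : 0 < cnt d 1 by apply: Hc1; lia.
have Hsize : size d = \sum_(x <- iota 1 D) cnt d x.
  rewrite /cnt sum_count ?iota_uniq // => x /Hin; rewrite mem_iota; lia.
have Hlow : cnt d D + D.-1 <= size d.
  rewrite Hsize.
  rewrite (iota_last HD).
  rewrite big_cat big_seq1 /= addnC leq_add2r.
  rewrite -{1}(size_iota 1 D.-1) -sum1_size; apply: leq_sum_seq => x.
  rewrite mem_iota => Hx; apply: Hc1; lia.
case: (leqP 2 (cnt d D)) => HD2.
  case: (leqP (cnt d D) D.+1) => HDb.
    apply: (concl (nseq (cnt d D).-1 D ++ iota (cnt d D).-1 (D - (cnt d D).-1)) D D.-1).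
    - by rewrite size_cat size_nseq size_iota; lia.
    - apply/allP => x; rewrite mem_cat mem_nseq mem_iota => /orP [/andP [_ /eqP ->]|/andP [H _]] //; lia.
    - move=> x; rewrite cntA; last lia.
      have := Hc1 x; have := Hc0 x; have := HD2; have := HDb; have := HD; case: (eqVneq x D) => [->|?]; case: (eqVneq D x.+1) => [E|/negbTE E]; rewrite ?E ?eqxx /= ?mul1n ?mul0n ?muln0 ?muln1; lia.
    - move=> x; rewrite !cntA; try lia.
      have := Hc1 x; have := Hc0 x; have := HD2; have := HDb; have := HD; case: (eqVneq x D) => [->|?]; case: (eqVneq D x.+1) => [E|/negbTE E]; rewrite ?E ?eqxx /= ?mul1n ?mul0n ?muln0 ?muln1; lia.
    - move=> x; rewrite !cntA; try lia.
      have := Hc1 x; have := Hc0 x; have := HD2; have := HDb; have := HD; case: (eqVneq x D) => [->|?]; case: (eqVneq D x.+1) => [E|/negbTE E]; rewrite ?E ?eqxx /= ?mul1n ?mul0n ?muln0 ?muln1; lia.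
    - rewrite cntA; lia.
  apply: (concl (nseq D D) D D).
  - by rewrite size_nseq.
  - by apply/allP => x; rewrite mem_nseq => /andP [_ /eqP ->].
  - move=> x; rewrite cnt_nseq.
    have := Hc1 x; have := Hc0 x; have := HD2; have := HDb; have := HD; case: (eqVneq x D) => [->|?]; case: (eqVneq D x.+1) => [E|/negbTE E]; rewrite ?E ?eqxx /= ?mul1n ?mul0n ?muln0 ?muln1; lia.
  - move=> x; rewrite !cnt_nseq.
    have := Hc1 x; have := Hc0 x; have := HD2; have := HDb; have := HD; case: (eqVneq x D) => [->|?]; case: (eqVneq D x.+1) => [E|/negbTE E]; rewrite ?E ?eqxx /= ?mul1n ?mul0n ?muln0 ?muln1; lia.
  - move=> x; rewrite !cnt_nseq.
    have := Hc1 x; have := Hc0 x; have := HD2; have := HDb; have := HD; case: (eqVneq x D) => [->|?]; case: (eqVneq D x.+1) => [E|/negbTE E]; rewrite ?E ?eqxx /= ?mul1n ?mul0n ?muln0 ?muln1; lia.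
  - rewrite cnt_nseq; case: (eqVneq D 1) => [E|/negbTE E]; rewrite ?E ?eqxx ?mul1n ?mul0n; lia.
have HD1 : cnt d D = 1 by lia.
case: (leqP 2 (cnt d 1)) => H12.
  have HDge : 1 < D.
    case: (eqVneq D 1) => [E|?]; last lia.
    by move: HD1; rewrite E; lia.
  apply: (concl [:: D] 1 D.-1) => //=.
  - by rewrite andbT.
  - move=> x; have := Hc1 x; have := Hc0 x; case: (eqVneq x D) => [Ex|?];
      case: (eqVneq x 1) => [E1|?]; rewrite ?Ex ?E1 ?eqxx /=; lia.
  - move=> x; have := Hc1 x; have := Hc0 x; case: (eqVneq x D) => [Ex|?];
      case: (eqVneq x 1) => [E1|?]; rewrite ?Ex ?E1 ?eqxx /=; lia.
  - move=> x; have := Hc1 x; have := Hc0 x; case: (eqVneq x D) => [Ex|?];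
      case: (eqVneq x 1) => [E1|?]; rewrite ?Ex ?E1 ?eqxx /=; lia.
  - lia.
have H11 : cnt d 1 = 1 by lia.
case: (boolP (has (fun x => 1 < cnt d x) (iota 2 (D - 2)))) => [/hasP [x0 Hx0 Hcx0] | /hasPn Hno].
  rewrite mem_iota in Hx0.
  have HD3 : 2 < D by lia.
  have Hsl : size (iota 1 D.-1 ++ [:: x0]) = D by rewrite size_cat size_iota /=; lia.
  have Hpl : all (fun x => 0 < x) (iota 1 D.-1 ++ [:: x0]).
    by apply/allP => x; rewrite mem_cat mem_iota inE => /orP [|/eqP ->]; lia.
  case: (posnP (cnt (iota 1 D.-1 ++ [:: x0]) D + (cnt d D.-1 - (D == D.-1) - cnt (iota 1 D.-1 ++ [:: x0]) D.-1))) => Hz;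
    rewrite (cntE D x0 HD) (cntE D.-1 x0 HD) in Hz.
    apply: (concl _ D D.-2 Hsl Hpl).
    - move=> x; rewrite ?cntE; try lia. (have := Hc1 x; have := Hc0 x; case: (eqVneq x D) => [Ex|?]; case: (eqVneq x 1) => [E1|?]; case: (eqVneq x x0) => [E0|?]; case: (eqVneq x D.-1) => [Em|?]; rewrite ?Ex ?E1 ?E0 ?Em ?eqxx /=; lia).
    - move=> x Hx.
      have : x = D.-1 \/ x = D \/ D < x by lia.
      case=> [->|[->|Hx']].
      + by rewrite prednK // !cntE.
      + rewrite !cntE // HD1 eqxx; clear -Hx0 HD3; lia.
      + rewrite !cntE // (Hc0 x Hx'); clear -Hx0 Hx'; lia.
    - move=> x Hx; rewrite !cntE //.
      have := Hc1 x; move: Hx; case: (eqVneq x x0) => [->|Hne]; [clear -Hx0 Hcx0 HD3 | clear -Hx0 Hcx0 HD3 Hne]; lia.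
    - rewrite cntE //; clear -Hsz Hx0 HD3; lia.
  apply: (concl _ D D.-1 Hsl Hpl).
  - move=> x; rewrite ?cntE; try lia. (have := Hc1 x; have := Hc0 x; case: (eqVneq x D) => [Ex|?]; case: (eqVneq x 1) => [E1|?]; case: (eqVneq x x0) => [E0|?]; case: (eqVneq x D.-1) => [Em|?]; rewrite ?Ex ?E1 ?E0 ?Em ?eqxx /=; lia).
  - move=> x Hx.
    have : x = D \/ D < x by lia.
    case=> [->|Hx'].
    + rewrite !cntE // HD1 eqxx; clear -Hx0 HD3; lia.
    + rewrite !cntE // (Hc0 x Hx'); clear -Hx0 Hx'; lia.
  - move=> x Hx.
    have : x = D.-1 \/ x <= D.-2 by lia.
    case=> [->|Hx'].
      by rewrite prednK // !cntE.
    rewrite !cntE //.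
    have := Hc1 x; move: Hx; case: (eqVneq x x0) => [E0|Hne]; [rewrite E0; clear -Hx0 Hcx0 HD3 Hx' E0 | clear -Hx0 Hcx0 HD3 Hne Hx']; lia.
  - rewrite cntE //; clear -Hsz Hx0 HD3; lia.
have Hup : size d <= D.
  rewrite Hsize -{2}(size_iota 1 D) -sum1_size; apply: leq_sum_seq => x.
  rewrite mem_iota => Hx.
  case: (eqVneq x 1) => [->|?]; first by rewrite H11.
  case: (eqVneq x D) => [->|?]; first by rewrite HD1.
  by rewrite leqNgt; apply: Hno; rewrite mem_iota; lia.
have HD1' : D = 1 by lia.
move: Hodd Hup Hfull Hin; rewrite HD1'.
case: d {Hn H0 Hc1 Hc0 Hcz concl HcD Hc11 Hsize Hlow HD2 HD1 H12 H11 Hsz Hno} => [|a [|b d]] //=.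
- by move=> _ _ /(_ 1 isT).
- move=> Hodd _ _ /(_ a (mem_head _ _)) Ha.
  move: Hodd; have -> : a = 1 by lia.
  by rewrite addn0.
Qed.

Theorem lemma4 (d : seq nat) :
  full_seq d ->
  (forall x, x \in d -> 1 <= x <= dmax d) ->
  (dmax d).*2 <= size d ->
  graphic d.
Proof.
move=> [Hf Ho] Hin Hs.
apply: (@main (size d) d (dmax d)) => //.
exact: (leq_trans Hs (leqnSn _)).
Qed.
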